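(* Let $H$, $d$, $(X,\mu)$, $\mathcal{A}$, $(N_s)$, $\delta_r,s_r,\sigma_s$ be as in the context and fix an integer $r\ge3$. Fix $0\le\alpha<\beta$ and an integer $s>s_r+r$. Then for any partition $\mathcal{Q}$ of $[r]$, any $\underline h\in\Delta_{\mathcal{Q}}(\alpha,\beta)$, any $f\in\mathcal{A}$ and any $\mathcal{P}\in\mathfrak{P}_{[r]}$, $$|\widetilde\psi_{f,\underline h}(\mathcal{P})-\widetilde\psi^{\mathcal{Q}}_{f,\underline h}(\mathcal{P})|\le C_{r,s}\,e^{-(\beta\delta_r-r\alpha\sigma_s)}N_s(f)^r,$$ where $C_{r,s}$ depends only on $r$ and $s$.
   Context: $H$ is a locally compact second countable group with left-invariant metric $d$, acting measure-preservingly on a probability space $(X,\mu)$; $h\cdot f=f\circ h^{-1}$. $\mathcal{A}\subset L^\infty(X,\mu)$ is an $H$-invariant subalgebra and $(N_s)_{s\ge1}$ seminorms on it with (constants depending only on $s$): $N_s(f)\ll N_{s+1}(f)$; $\|f\|_{L^\infty}\ll N_s(f)$; $N_s(h\cdot f)\ll e^{\sigma_s d(h,e)}N_s(f)$ for some $\sigma_s>0$; $N_s(f_1f_2)\ll N_{s+1}(f_1)N_{s+1}(f_2)$. Exponential mixing of all orders: for every $k\ge2$ there are $\delta_k>0$ and an integer $s_k>0$ with $\big|\mu(\prod_{i=1}^k h_i\cdot f_i)-\prod_i\mu(f_i)\big|\ll_{k,s}e^{-\delta_k\min_{i\ne j}d(h_i,h_j)}\prod_iN_s(f_i)$ for all $s>s_k$,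 $f_i\in\mathcal{A}$, $h_i\in H$; $(\sigma_s)$, $(s_k)$ increasing, $(\delta_k)$ decreasing, $\delta_k<k\sigma_s$. Distances: $d^I(\underline h)=\max_{i,j\in I}d(h_i,h_j)$, $d_{I,J}(\underline h)=\min_{i\in I,j\in J}d(h_i,h_j)$, $d^{\mathcal{Q}}=\max_{I\in\mathcal{Q}}d^I$, $d_{\mathcal{Q}}=\min\{d_{I,J}:I\ne J\in\mathcal{Q}\}$, $\Delta_{\mathcal{Q}}(\alpha,\beta)=\{\underline h\in H^r:d^{\mathcal{Q}}(\underline h)\le\alpha,\ d_{\mathcal{Q}}(\underline h)>\beta\}$. $\mathfrak{P}_{[r]}$ is the set of cyclically ordered partitions of $[r]$ (partitions into non-empty blocks with a cyclic order on blocks). For $f\in\mathcal{A}$, $\underline h\in H^r$: $\psi_{f,\underline h}(I)=\mu(\prod_{i\in I}h_i\cdot f)$ for $I\ne\emptyset$, $\psi_{f,\underline h}(\emptyset)=1$; $\psi^{\mathcal{Q}}(I)=\prod_{J\in\mathcal{Q}}\psi(I\cap J)$; $\widetilde\psi(\mathcal{P})=\prod_{I\in\mathcal{P}}\psi(I)$, $\widetilde\psi^{\mathcal{Q}}(\mathcal{P})=\prod_{I\in\mathcal{P}}\psi^{\mathcal{Q}}(I)$. *)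

(* Defs.v *)
From mathcomp Require Import all_boot all_order all_algebra.
From mathcomp Require Import all_classical all_reals all_analysis.
Set Implicit Arguments.
Unset Strict Implicit.
Unset Printing Implicit Defensive.
Import Order.TTheory GRing.Theory Num.Theory.
Local Open Scope classical_set_scope.
Local Open Scope ring_scope.

Section Defs.
Variable R : realType.

Section Metric.
Variable G : groupType.

Definition is_metric (d : G -> G -> R) : Prop :=
  [/\ forall x y, 0 <= d x y,
      forall x y, d x y = 0 <-> x = y,
      forall x y, d x y = d y x &
      forall x y z, d x z <= d x y + d y z].

Definition left_invariant (d : G -> G -> R) : Prop :=
  forall g x y, d (g * x)%g (g * y)%g = d x y.

(* min_{i <> j} d(h_i, h_j) for k+2 >= 2 points (the default value
   d(h_0, h_{k+1}) is itself one of the values minimized over) *)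
Definition mindist (d : G -> G -> R) (k : nat) (h : 'I_k.+2 -> G) : R :=
  \big[Num.min/d (h ord0) (h ord_max)]_(p : 'I_k.+2 * 'I_k.+2 | p.1 != p.2)
     d (h p.1) (h p.2).

(* Delta_Q(alpha, beta): d^Q(h) <= alpha and d_Q(h) > beta, with the max/min
   over the finitely many pairs written out *)
Definition in_Delta (d : G -> G -> R) (r : nat) (Q : {set {set 'I_r}})
    (alpha beta : R) (h : 'I_r -> G) : Prop :=
  (forall I, I \in Q -> forall i j, i \in I -> j \in I -> d (h i) (h j) <= alpha)
  /\ (forall I J, I \in Q -> J \in Q -> I != J ->
        forall i j, i \in I -> j \in J -> beta < d (h i) (h j)).
End Metric.

Section Action.
Variables (G : groupType) (dX : measure_display) (X : measurableType dX).
Variable (P : probability X R).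
Variable (act : G -> X -> X).

Definition mp_action : Prop :=
  [/\ act 1%g = id,
      forall g h, act (g * h)%g = act g \o act h,
      forall g, measurable_fun setT (act g) &
      forall g (B : set X), measurable B -> P (act g @^-1` B) = P B].

Definition hact (h : G) (f : X -> R) : X -> R := fun x => f (act (h^-1)%g x).

Definition mu (f : X -> R) : R := fine (\int[P]_x (f x)%:E).

Definition is_Linfty (f : X -> R) : Prop :=
  measurable_fun setT f /\ exists M : R, {ae P, forall x, `|f x| <= M}.

Definition inv_subalgebra (A : set (X -> R)) : Prop :=
  [/\ forall f, A f -> is_Linfty f,
      forall f g, A f -> A g -> A (f \+ g),
      forall (c : R) f, A f -> A (fun x => c * f x),
      forall f g, A f -> A g -> A (f \* g) &
      forall h f, A f -> A (hact h f)].

Definition good_seminorms (d : G -> G -> R) (A : set (X -> R))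
    (N : nat -> (X -> R) -> R) (sigma : nat -> R) : Prop :=
  forall s, (1 <= s)%N ->
  [/\
      (forall f g, A f -> A g -> N s (f \+ g) <= N s f + N s g) /\
      (forall (c : R) f, A f -> N s (fun x => c * f x) = `|c| * N s f),
      (exists C : R, forall f, A f -> N s f <= C * N s.+1 f),
      (exists C : R, forall f, A f -> {ae P, forall x, `|f x| <= C * N s f}),
      0 < sigma s /\
      (exists C : R, forall h f, A f ->
          N s (hact h f) <= C * expR (sigma s * d h 1%g) * N s f) &
      (exists C : R, forall f1 f2, A f1 -> A f2 ->
          N s (f1 \* f2) <= C * N s.+1 f1 * N s.+1 f2)].

Definition exp_mixing_all_orders (d : G -> G -> R) (A : set (X -> R))
    (N : nat -> (X -> R) -> R) (delta : nat -> R) (sk : nat -> nat) : Prop :=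
  forall k : nat,
  [/\ 0 < delta k.+2, (0 < sk k.+2)%N &
      forall s, (sk k.+2 < s)%N ->
      exists C : R, forall (f : 'I_k.+2 -> X -> R) (h : 'I_k.+2 -> G),
        (forall i, A (f i)) ->
        `| mu (fun x => \prod_(i < k.+2) hact (h i) (f i) x)
           - \prod_(i < k.+2) mu (f i) |
        <= C * expR (- (delta k.+2 * mindist d h)) * \prod_(i < k.+2) N s (f i)].

Definition constants_ok (delta : nat -> R) (sk : nat -> nat) (sigma : nat -> R) : Prop :=
  [/\ (forall s, (1 <= s)%N -> sigma s <= sigma s.+1),
      (forall k, (2 <= k)%N -> (sk k <= sk k.+1)%N),
      (forall k, (2 <= k)%N -> delta k.+1 <= delta k) &
      (forall k s, (2 <= k)%N -> (1 <= s)%N -> delta k < k%:R * sigma s)].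

Variable r : nat.

Definition psi (f : X -> R) (h : 'I_r -> G) (I : {set 'I_r}) : R :=
  if I == finset.set0 then 1 else mu (fun x => \prod_(i in I) hact (h i) f x).

Definition psiQ (Q : {set {set 'I_r}}) (f : X -> R) (h : 'I_r -> G)
    (I : {set 'I_r}) : R :=
  \prod_(J in Q) psi f h (I :&: J).

(* A cyclically ordered partition of [r] is represented by a list of its
   blocks (read cyclically, up to rotation): distinct blocks forming a
   partition (non-empty, disjoint, covering) of 'I_r. *)
Definition cyc_ord_partition (Ps : seq {set 'I_r}) : bool :=
  uniq Ps && finset.partition [set I in Ps] [set: 'I_r].

Definition psit (f : X -> R) (h : 'I_r -> G) (Ps : seq {set 'I_r}) : R :=
  \prod_(I <- Ps) psi f h I.

Definition psitQ (Q : {set {set 'I_r}}) (f : X -> R) (h : 'I_r -> G)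
    (Ps : seq {set 'I_r}) : R :=
  \prod_(I <- Ps) psiQ Q f h I.
End Action.
End Defs.

(* Main.v *)
Require Import Defs.
From mathcomp Require Import all_boot all_order all_algebra.
From mathcomp Require Import all_classical all_reals all_analysis.
From mathcomp Require Import measurable_realfun.
From mathcomp Require Import ring lra zify.
Import Order.TTheory GRing.Theory Num.Theory.
Local Open Scope classical_set_scope.
Local Open Scope ring_scope.
Set Implicit Arguments.
Unset Strict Implicit.

Lemma hactM (R : realType) (G : groupType) dX (X : measurableType dX)
  (P : probability X R) (act : G -> X -> X) g g' (F : X -> R) :
  mp_action P act -> hact act g (hact act g' F) = hact act (g * g')%g F.
Proof.
by move=> [_ actM _ _]; apply/funext=> x; rewrite /hact invgM actM.
Qed.

Lemma Linfty_integrable (R : realType) dX (X : measurableType dX)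
  (P : probability X R) (F : X -> R) :
  is_Linfty P F -> P.-integrable setT (EFin \o F).
Proof.
move=> [mF [M HM]]; apply/integrableP; split; first exact/measurable_EFinP.
apply: (@le_lt_trans _ _ (`|M|%:E * P setT)%E).
  have := @integral_le_bound _ _ _ P setT (EFin \o F) (`|M|%:E) measurableT.
  apply => //.
  - exact/measurable_EFinP.
  apply: filterS HM => x /= Hx _; rewrite lee_fin (le_trans Hx)//.
  exact: ler_norm.
by rewrite probability_setT mule1 ltry.
Qed.

Lemma mu_bound (R : realType) dX (X : measurableType dX)
  (P : probability X R) (g : X -> R) (B : R) :
  measurable_fun setT g -> 0 <= B -> {ae P, forall x, `|g x| <= B} ->
  `|mu P g| <= B.
Proof.
move=> mg B0 Hae.
have H1 : (`|\int[P]_x (g x)%:E| <= B%:E)%E.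
  apply: le_trans (le_abse_integral _ _ _) _ => //.
    exact/measurable_EFinP.
  apply: (@le_trans _ _ (B%:E * P setT)%E); last by rewrite probability_setT mule1.
  apply: integral_le_bound => //.
  - exact/measurable_EFinP.
  by apply: filterS Hae => x /= Hx _; rewrite lee_fin.
rewrite /mu; move: H1; case: (\int[P]_x (g x)%:E)%E => [r| |] //=.
Qed.

Lemma mu_hact (R : realType) (G : groupType) dX (X : measurableType dX)
  (P : probability X R) (act : G -> X -> X) (A : set (X -> R)) g (F : X -> R) :
  mp_action P act -> inv_subalgebra P act A -> A F ->
  mu P (hact act g F) = mu P F.
Proof.
move=> mp [AL _ _ _ Ah] AF.
have [_ _ mact actP] := mp.
have mphi : measurable_fun setT (act (g^-1)%g) by exact: mact.
rewrite /mu /hact; congr fine.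
have mF : measurable_fun setT F by have [] := AL _ AF.
have := @integral_pushforward _ _ _ _ _ (act (g^-1)%g) mphi P setT (EFin \o F)
  (proj2 (measurable_EFinP _ _) mF).
rewrite preimage_setT => HP.
have -> : (\int[P]_x (F (act (g^-1)%g x))%:E)%E =
  (\int[P]_(x in setT) ((EFin \o F) \o act (g^-1)%g) x)%E by [].
rewrite -HP //; last first.
  by have := Linfty_integrable (AL _ (Ah g F AF)); rewrite /hact.

apply: eq_measure_integral => B mB _.
exact: actP.
Qed.

Lemma Nge0 (R : realType) (G : groupType) dX (X : measurableType dX)
  (P : probability X R) (act : G -> X -> X) (d : G -> G -> R) (A : set (X -> R))
  (N : nat -> (X -> R) -> R) (sigma : nat -> R) s f :
  inv_subalgebra P act A -> good_seminorms P act d A N sigma ->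
  (1 <= s)%N -> A f -> 0 <= N s f.
Proof.
move=> [_ _ Asc _ _] /(_ s) GN s1 Af; have [[Nadd Nsc] _ _ _ _] := GN s1.
have h0 : N s (fun x => 0 * f x) = 0 by rewrite Nsc // normr0 mul0r.
have e : (f \+ (fun x => -1 * f x)) = (fun x => 0 * f x).
  by apply/funext => x /=; rewrite mul0r mulN1r subrr.
have := Nadd _ _ Af (Asc (-1) _ Af); rewrite e h0 Nsc // normrN normr1 mul1r.
lra.
Qed.

Lemma Nmono (R : realType) (G : groupType) dX (X : measurableType dX)
  (P : probability X R) (act : G -> X -> X) (d : G -> G -> R) (A : set (X -> R))
  (N : nat -> (X -> R) -> R) (sigma : nat -> R) a :
  inv_subalgebra P act A -> good_seminorms P act d A N sigma ->
  (1 <= a)%N -> forall j, exists c, 0 <= c /\ forall f, A f -> N a f <= c * N (a + j)%N f.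
Proof.
move=> sA GN a1; elim=> [|j [c [c0 Hc]]].
  by exists 1; split => // f Af; rewrite addn0 mul1r.
have [_ [C HC] _ _ _] := GN (a + j)%N (leq_trans a1 (leq_addr _ _)).
exists (c * `|C|); split; first exact: mulr_ge0.
move=> f Af; apply: (le_trans (Hc f Af)); rewrite -mulrA ler_wpM2l //.
apply: (le_trans (HC f Af)); rewrite addnS ler_wpM2r //.
  by apply: (Nge0 sA GN) => //; rewrite ltnS (leq_trans a1 (leq_addr _ _)).
exact: ler_norm.
Qed.

Lemma Aprod (R : realType) (G : groupType) dX (X : measurableType dX)
  (P : probability X R) (act : G -> X -> X) (A : set (X -> R)) (I : Type)
  (l : seq I) (F : I -> X -> R) :
  inv_subalgebra P act A -> (0 < size l)%N -> (forall i, A (F i)) ->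
  A (fun x => \prod_(i <- l) F i x).
Proof.
move=> [_ _ _ AM _]; elim: l => [//|i l IH] _ AF.
case: l IH => [|k l] IH.
  have -> : (fun x => \prod_(j <- [:: i]) F j x) = F i.
    by apply/funext => x; rewrite big_cons big_nil mulr1.
  exact: AF.
have -> : (fun x => \prod_(j <- i :: k :: l) F j x) = F i \* (fun x => \prod_(j <- k :: l) F j x).
  by apply/funext => x; rewrite big_cons.
exact: AM (AF i) (IH isT AF).
Qed.

Lemma Nprod (R : realType) (G : groupType) dX (X : measurableType dX)
  (P : probability X R) (act : G -> X -> X) (d : G -> G -> R) (A : set (X -> R))
  (N : nat -> (X -> R) -> R) (sigma : nat -> R) (I : Type) :
  inv_subalgebra P act A -> good_seminorms P act d A N sigma ->
  forall n t, (1 <= t)%N -> exists K, 0 <= K /\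
  forall (l : seq I) (F : I -> X -> R), (0 < size l <= n)%N -> (forall i, A (F i)) ->
  N t (fun x => \prod_(i <- l) F i x) <= K * \prod_(i <- l) N (t + n)%N (F i).
Proof.
move=> sA GN; elim=> [|n IH] t t1.
  by exists 0; split => // -[|i l] F.
have [c1 [c10 Hc1]] := Nmono sA GN t1 n.+1.
have t1' : (1 <= t.+1)%N by [].
have [K' [K'0 HK']] := IH t.+1 t1'.
have [c2 [c20 Hc2]] := Nmono sA GN t1' n.
have [_ _ _ _ [Cm HCm]] := GN t t1.
have Cm0 : 0 <= `|Cm| by [].
exists (c1 + `|Cm| * c2 * K'); split.
  by apply: addr_ge0 => //; apply: mulr_ge0 => //; apply: mulr_ge0.
have tn1 : (1 <= t + n.+1)%N by rewrite (leq_trans t1 (leq_addr _ _)).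
move=> [|i l] F // /andP[_ hs] AF.
have a0 : 0 <= N (t + n.+1)%N (F i) by exact: (Nge0 sA GN).
case: l hs => [|k l] hs.
  have -> : (fun x => \prod_(j <- [:: i]) F j x) = F i.
    by apply/funext => x; rewrite big_cons big_nil mulr1.
  rewrite big_cons big_nil mulr1; apply: (le_trans (Hc1 _ (AF i))).
  apply: ler_wpM2r => //; rewrite lerDl; apply: mulr_ge0 => //; exact: mulr_ge0.
have -> : (fun x => \prod_(j <- i :: k :: l) F j x) =
    F i \* (fun x => \prod_(j <- k :: l) F j x).
  by apply/funext => x; rewrite big_cons.
have Ap : A (fun x => \prod_(j <- k :: l) F j x) by exact: (Aprod sA).
have p0 : 0 <= \prod_(j <- k :: l) N (t + n.+1)%N (F j).
  by apply: prodr_ge0 => j _; exact: (Nge0 sA GN).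
have x0 : 0 <= N t.+1 (F i) by exact: (Nge0 sA GN).
have y0 : 0 <= N t.+1 (fun x => \prod_(j <- k :: l) F j x) by exact: (Nge0 sA GN).
have Hx : N t.+1 (F i) <= c2 * N (t + n.+1)%N (F i).
  by rewrite -addSnnS; exact: Hc2.
have Hy : N t.+1 (fun x => \prod_(j <- k :: l) F j x) <=
    K' * \prod_(j <- k :: l) N (t + n.+1)%N (F j).
  by rewrite -addSnnS; apply: HK' => //.
apply: (le_trans (HCm _ _ (AF i) Ap)).
rewrite big_cons.
apply: (@le_trans _ _ (`|Cm| * (c2 * N (t + n.+1)%N (F i)) *
    (K' * \prod_(j <- k :: l) N (t + n.+1)%N (F j)))).
  apply: (@le_trans _ _ (`|Cm| * N t.+1 (F i) * N t.+1 (fun x => \prod_(j <- k :: l) F j x))).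
    rewrite -!mulrA ler_wpM2r //; last exact: ler_norm.
    exact: mulr_ge0.
  apply: ler_pM => //; first exact: mulr_ge0.
  exact: ler_wpM2l.
have : 0 <= c1 * (N (t + n.+1)%N (F i) * \prod_(j <- k :: l) N (t + n.+1)%N (F j)).
  by apply: mulr_ge0 => //; exact: mulr_ge0.
set a := N _ (F i); set p := \prod_(_ <- _) _.
move=> H.
have -> : `|Cm| * (c2 * a) * (K' * p) = `|Cm| * c2 * K' * (a * p) by ring.
rewrite mulrDl lerDr; exact: H.
Qed.

Local Close Scope classical_set_scope.

Lemma regroup (T : finType) (Q : {set {set T}}) (I : {set T}) (R : Type) (idx : R)
  (op : Monoid.com_law idx) (F : T -> R) :
  finset.partition Q [set: T] ->
  \big[op/idx]_(i in I) F i = \big[op/idx]_(J in Q) \big[op/idx]_(i in I :&: J) F i.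
Proof.
move=> PQ.
have -> : \big[op/idx]_(i in I) F i = \big[op/idx]_(i in [set: T] | i \in I) F i.
  by apply: eq_bigl => i; rewrite finset.in_setT.
rewrite (set_partition_big_cond _ PQ); apply: eq_bigr => J _.
by apply: eq_bigl => i; rewrite finset.in_setI andbC.
Qed.

Lemma telescope_prod (R : realType) (T : Type) (Ps : seq T) (a b w : T -> R) (K E : R) :
  0 <= K -> 0 <= E ->
  (forall I, `|a I| <= w I) -> (forall I, `|b I| <= w I) ->
  (forall I, `|a I - b I| <= K * E * w I) ->
  `|\prod_(I <- Ps) a I - \prod_(I <- Ps) b I| <=
    (size Ps)%:R * K * E * \prod_(I <- Ps) w I.
Proof.
move=> K0 E0 Ha Hb Hab.
have w0 : forall I, 0 <= w I by move=> I; exact: le_trans (Ha I).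
have Hbl : forall l : seq T, `|\prod_(I <- l) b I| <= \prod_(I <- l) w I.
  move=> l; rewrite normr_prod; apply: ler_prod => I _; rewrite normr_ge0; exact: Hb.
elim: Ps => [|x l IH]; first by rewrite !big_nil subrr normr0 mul0r !mul0r.
rewrite !big_cons.
have -> : a x * \prod_(j <- l) a j - b x * \prod_(j <- l) b j =
  a x * (\prod_(j <- l) a j - \prod_(j <- l) b j) + (a x - b x) * \prod_(j <- l) b j by ring.
apply: (le_trans (ler_normD _ _)); rewrite !normrM.
set p := \prod_(j <- l) w j.
have p0 : 0 <= p by apply: prodr_ge0.
have H1 : `|a x| * `|\prod_(j <- l) a j - \prod_(j <- l) b j| <= w x * ((size l)%:R * K * E * p).
  by apply: ler_pM.
have H2 : `|a x - b x| * `|\prod_(j <- l) b j| <= K * E * w x * p.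
  by apply: ler_pM.
apply: (le_trans (lerD H1 H2)).
rewrite /= -addn1 natrD le_eqVlt; apply/orP; left; apply/eqP; ring.
Qed.

Lemma mindist_gt (R : realType) (G : groupType) (d : G -> G -> R) k
  (g : 'I_k.+2 -> G) (beta : R) :
  (forall p q : 'I_k.+2, p != q -> beta < d (g p) (g q)) -> beta < mindist d g.
Proof.
move=> H; rewrite /mindist; apply: (big_ind (fun x => beta < x)).
- by apply: H; rewrite -(inj_eq val_inj).
- by move=> x y hx hy; rewrite lt_min hx hy.
- by move=> [p q] /= pq; apply: H.
Qed.

Lemma delta_mono (R : realType) (delta : nat -> R) :
  (forall k, (2 <= k)%N -> delta k.+1 <= delta k) ->
  forall j k, (2 <= k)%N -> delta (k + j)%N <= delta k.
Proof.
move=> H; elim=> [|j IH] k k2; first by rewrite addn0.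
rewrite addnS; apply: le_trans (IH k k2); apply: H.
exact: leq_trans k2 (leq_addr _ _).
Qed.

Lemma sk_mono (sk : nat -> nat) :
  (forall k, (2 <= k)%N -> (sk k <= sk k.+1)%N) ->
  forall j k, (2 <= k)%N -> (sk k <= sk (k + j))%N.
Proof.
move=> H; elim=> [|j IH] k k2; first by rewrite addn0.
rewrite addnS; apply: leq_trans (IH k k2) _; apply: H.
exact: leq_trans k2 (leq_addr _ _).
Qed.

Lemma card_hit (T : finType) (Q : {set {set T}}) (I : {set T}) :
  finset.partition Q [set: T] ->
  (#|[set J in Q | I :&: J != finset.set0]| <= #|I|)%N.
Proof.
move=> PQ.
have -> : #|I| = (\sum_(J in Q) #|I :&: J|)%N.
  rewrite -sum1_card (regroup _ _ _ PQ); apply: eq_bigr => J _.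
  by rewrite sum1_card.
rewrite -sum1_card.
have -> : (\sum_(J in [set J in Q | I :&: J != finset.set0]) 1 =
   \sum_(J in Q) (if I :&: J != finset.set0 then 1 else 0))%N.
  rewrite -big_mkcondr; apply: eq_bigl => J; by rewrite inE.
apply: leq_sum => J _; case: ifP => // h.
by rewrite card_gt0.
Qed.

Lemma restrictT (T0 : finType) (Q : {set {set T0}}) (I : {set T0}) (R : Type) (idx : R)
  (op : Monoid.com_law idx) (Phi : {set T0} -> R) :
  Phi finset.set0 = idx ->
  \big[op/idx]_(J in Q) Phi (I :&: J) =
  \big[op/idx]_(J in [set J in Q | I :&: J != finset.set0]) Phi (I :&: J).
Proof.
move=> P0; rewrite big_mkcond [RHS]big_mkcond; apply: eq_bigr => J _.
rewrite inE; case: (J \in Q) => //=.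
by case: eqP => // ->.
Qed.

Lemma big_enum_nth (T0 : finType) (S : {set T0}) n (x0 : T0) (R : Type) (idx : R)
  (op : Monoid.com_law idx) (Phi : T0 -> R) :
  size (enum S) = n ->
  \big[op/idx]_(p < n) Phi (nth x0 (enum S) p) = \big[op/idx]_(J in S) Phi J.
Proof.
move=> <-; rewrite -(big_mkord xpredT (fun p => Phi (nth x0 (enum S) p))).
by rewrite -(big_nth x0 xpredT Phi) big_enum.
Qed.

Local Open Scope classical_set_scope.

Lemma mix_unif (R : realType) (G : groupType) dX (X : measurableType dX)
  (P : probability X R) (act : G -> X -> X) (d : G -> G -> R) (A : set (X -> R))
  (N : nat -> (X -> R) -> R) (sigma delta : nat -> R) (sk : nat -> nat) t :
  inv_subalgebra P act A -> good_seminorms P act d A N sigma ->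
  exp_mixing_all_orders P act d A N delta sk -> (1 <= t)%N ->
  forall n, (forall m, (m <= n)%N -> (sk m.+2 < t)%N) ->
  exists C, 0 <= C /\ forall m, (m <= n)%N ->
  forall (f : 'I_m.+2 -> X -> R) (h : 'I_m.+2 -> G), (forall i, A (f i)) ->
  `| mu P (fun x => \prod_(i < m.+2) hact act (h i) (f i) x)
           - \prod_(i < m.+2) mu P (f i) |
  <= C * expR (- (delta m.+2 * mindist d h)) * \prod_(i < m.+2) N t (f i).
Proof.
move=> sA GN Mx t1; elim=> [|n IH] Hsk.
  have [_ _ Hm] := Mx 0%N; have [C HC] := Hm t (Hsk 0%N (leqnn 0)).
  exists `|C|; split => // -[|m] // _ f h Af.
  apply: (le_trans (HC f h Af)); rewrite -!mulrA ler_wpM2r ?ler_norm //.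
  apply: mulr_ge0; first exact: expR_ge0.
  by apply: prodr_ge0 => i _; exact: (Nge0 sA GN).
have [C' [C'0 HC']] := IH (fun m hm => Hsk m (leqW hm)).
have [_ _ Hm] := Mx n.+1; have [C HC] := Hm t (Hsk n.+1 (leqnn _)).
exists (C' + `|C|); split; first by apply: addr_ge0.
move=> m; rewrite leq_eqVlt => /orP[/eqP ->|hm] f h Af.
  apply: (le_trans (HC f h Af)); rewrite -!mulrA ler_wpM2r //.
    apply: mulr_ge0; first exact: expR_ge0.
    by apply: prodr_ge0 => i _; exact: (Nge0 sA GN).
  by apply: le_trans (ler_norm C) _; rewrite lerDr.
apply: (le_trans (HC' m hm f h Af)); rewrite -!mulrA ler_wpM2r //.
  apply: mulr_ge0; first exact: expR_ge0.
  by apply: prodr_ge0 => i _; exact: (Nge0 sA GN).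
by rewrite lerDl.
Qed.

Lemma block_bound (R : realType) (H : groupType) (d : H -> H -> R)
  dX (X : measurableType dX) (P : probability X R)
  (act : H -> X -> X) (A : set (X -> R)) (N : nat -> (X -> R) -> R)
  (delta : nat -> R) (sk : nat -> nat) (sigma : nat -> R) :
  is_metric d -> left_invariant d -> mp_action P act -> inv_subalgebra P act A ->
  good_seminorms P act d A N sigma -> exp_mixing_all_orders P act d A N delta sk ->
  constants_ok delta sk sigma ->
  forall r : nat, (3 <= r)%N -> forall s : nat, (sk r + r < s)%N ->
  exists K, 0 <= K /\
  forall alpha beta : R, 0 <= alpha -> alpha < beta ->
  forall Q : {set {set 'I_r}}, finset.partition Q [set: 'I_r] ->
  forall h : 'I_r -> H, in_Delta d Q alpha beta h ->
  forall f : X -> R, A f -> forall I : {set 'I_r},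
  `| psi P act f h I - psiQ P act Q f h I | <=
    K * expR (- (beta * delta r - r%:R * alpha * sigma s)) * \prod_(i in I) N s f.
Proof.
move=> Hd Hli mp sA GN Mx [sgm skm dm dsg] r r3 s Hs.
have r0 : (0 < r)%N by apply: leq_trans r3.
pose i0 := Ordinal r0.
pose t := (s - r)%N.
have e2 : (r - 2).+2 = r by lia.
have [dr0 skr0 _] := Mx (r - 2)%N.
rewrite e2 in dr0 skr0.
have t1 : (1 <= t)%N by rewrite /t; lia.
have s1 : (1 <= s)%N by lia.
have ts : (t + r)%N = s by rewrite /t; lia.
have Hskm : forall m, (m <= r - 2)%N -> (sk m.+2 < t)%N.
  move=> m hm; have := @sk_mono sk skm (r - 2 - m) (m.+2) isT.
  have -> : (m.+2 + (r - 2 - m))%N = r by lia.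
  rewrite /t; lia.
have [Cmix [Cmix0 HCmix]] := mix_unif sA GN Mx t1 Hskm.
have [Kp [Kp0 HKp]] := Nprod 'I_r sA GN r t1.
rewrite ts in HKp.
have [_ _ _ [sig0 [Ct HCt]] _] := GN s s1.
have dmono : forall m, (m.+2 <= r)%N -> delta r <= delta m.+2.
  move=> m hm; have := @delta_mono R delta dm (r - m.+2) (m.+2) isT.
  by rewrite subnKC.
have [_ _ _ _ Ah] := sA.
pose Kp1 := Kp + 1; pose Ct1 := `|Ct| + 1.
pose S0 := #|{set 'I_r}|.
have Kp10 : 1 <= Kp1 by rewrite /Kp1 lerDr.
have Ct10 : 1 <= Ct1 by rewrite /Ct1 lerDr.
exists (Cmix * Kp1 ^+ S0 * Ct1 ^+ r); split.
  apply: mulr_ge0; first apply: mulr_ge0 => //.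
    by apply: exprn_ge0; apply: le_trans Kp10.
  by apply: exprn_ge0; apply: le_trans Ct10.
move=> alpha beta a0 ab Q PQ h [Hin Hout] f Af I.
have Nf0 : 0 <= N s f by exact: (Nge0 sA GN).
have K0 : 0 <= Cmix * Kp1 ^+ S0 * Ct1 ^+ r.
  apply: mulr_ge0; first apply: mulr_ge0 => //.
    by apply: exprn_ge0; apply: le_trans Kp10.
  by apply: exprn_ge0; apply: le_trans Ct10.
have Eq0 : psi P act f h I = psiQ P act Q f h I ->
  `| psi P act f h I - psiQ P act Q f h I | <=
    Cmix * Kp1 ^+ S0 * Ct1 ^+ r * expR (- (beta * delta r - r%:R * alpha * sigma s)) * \prod_(i in I) N s f.
  move=> ->; rewrite subrr normr0; apply: mulr_ge0; last exact: prodr_ge0.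
  by apply: mulr_ge0 => //; exact: expR_ge0.
set T := [set J in Q | I :&: J != finset.set0].
have psiQT : psiQ P act Q f h I = \prod_(J in T) psi P act f h (I :&: J).
  by rewrite /psiQ (restrictT Q I _ (Phi := psi P act f h)) // /psi eqxx.
have prodT : forall F : 'I_r -> R,
    \prod_(i in I) F i = \prod_(J in T) \prod_(i in I :&: J) F i.
  by move=> F; rewrite (regroup I _ _ PQ) (restrictT Q I _ (Phi := fun S => \prod_(i in S) F i)) // big_set0.
have [I0|In0] := eqVneq I finset.set0.
  apply: Eq0; rewrite I0 /psiQ /psi eqxx big1 // => J _.
  by rewrite finset.set0I eqxx.
have Tpos : (0 < #|T|)%N.
  have [i iI] := set0Pn _ In0.
  case/and3P: PQ => /eqP cQ _ _.
  have : i \in finset.cover Q by rewrite cQ finset.in_setT.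
  move=> /finset.bigcupP[J JQ iJ].
  apply/card_gt0P; exists J; rewrite inE JQ /=.
  by apply/set0Pn; exists i; rewrite finset.in_setI iI iJ.
have psiI : psi P act f h I =
    mu P (fun x => \prod_(J in T) \prod_(i in I :&: J) hact act (h i) f x).
  rewrite /psi (negbTE In0); congr (mu P _); apply/funext => x.
  exact: (prodT (fun i => hact act (h i) f x)).
case Tk : #|T| Tpos => [|[|m]] // _.
  have /cards1P [J0 TJ0] : #|T| == 1%N by rewrite Tk.
  have J0T : J0 \in T by rewrite TJ0 set11.
  have J0n : I :&: J0 != finset.set0 by move: J0T; rewrite inE => /andP[].
  apply: Eq0; rewrite psiI psiQT TJ0 big_set1 /psi (negbTE J0n).
  by congr (mu P _); apply/funext => x; rewrite big_set1.
have Tsz : size (enum T) = m.+2 by rewrite -cardE Tk.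
have mr : (m.+2 <= r)%N.
  rewrite -Tk; apply: leq_trans (card_hit I PQ) _.
  by rewrite -[X in (_ <= X)%N](card_ord r) max_card.
pose Js (p : 'I_m.+2) := nth finset.set0 (enum T) p.
have JsT : forall p, Js p \in T.
  by move=> p; rewrite -mem_enum; apply: mem_nth; rewrite Tsz.
have JsQ : forall p, Js p \in Q by move=> p; have := JsT p; rewrite inE => /andP[].
have JsI : forall p, I :&: Js p != finset.set0.
  by move=> p; have := JsT p; rewrite inE => /andP[].
have Jsinj : forall p q, p != q -> Js p != Js q.
  move=> p q pq; rewrite /Js nth_uniq ?Tsz //; exact: enum_uniq.
pose j (p : 'I_m.+2) := odflt i0 [pick i in I :&: Js p].
have jin : forall p, j p \in I :&: Js p.
  move=> p; rewrite /j; case: pickP => [i -> //|H0].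
  have [i iI] := set0Pn _ (JsI p).
  by have := H0 i; rewrite iI.
pose g p := h (j p).
pose F' (p : 'I_m.+2) := fun x => \prod_(i in I :&: Js p) hact act ((h (j p))^-1 * h i)%g f x.
have F'E : forall p, F' p = fun x => \prod_(i <- enum (I :&: Js p)) hact act ((h (j p))^-1 * h i)%g f x.
  by move=> p; apply/funext => x; rewrite big_enum.
have AF' : forall p, A (F' p).
  move=> p; rewrite F'E; apply: (Aprod sA); last by move=> i; exact: Ah.
  by rewrite -cardE card_gt0.
have hF' : forall p, hact act (g p) (F' p) = fun x => \prod_(i in I :&: Js p) hact act (h i) f x.
  move=> p; have e : forall i, hact act (g p) (hact act ((h (j p))^-1 * h i)%g f) = hact act (h i) f.
    by move=> i; rewrite (hactM _ _ _ mp) mulVKg.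
  apply/funext => x; rewrite {1}/hact /F'.
  by apply: eq_bigr => i _; rewrite -(e i).
have psiIeq : psi P act f h I = mu P (fun x => \prod_(p < m.+2) hact act (g p) (F' p) x).
  rewrite psiI; congr (mu P _); apply/funext => x.
  rewrite -(big_enum_nth finset.set0 _ (fun J => \prod_(i in I :&: J) hact act (h i) f x) Tsz).
  by apply: eq_bigr => p _; rewrite hF'.
have psiQeq : psiQ P act Q f h I = \prod_(p < m.+2) mu P (F' p).
  rewrite psiQT -(big_enum_nth finset.set0 _ (fun J => psi P act f h (I :&: J)) Tsz).
  apply: eq_bigr => p _.
  by rewrite -(mu_hact (g p) mp sA (AF' p)) hF' /psi (negbTE (JsI p)).
rewrite psiIeq psiQeq.
have mr2 : (m <= r - 2)%N by clear -mr; lia.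
apply: (le_trans (HCmix m mr2 F' g AF')).
have b0 : 0 < beta by apply: le_lt_trans ab.
have md : beta < mindist d g.
  apply: mindist_gt => p q pq.
  have := jin p; rewrite finset.in_setI => /andP[_ jp].
  have := jin q; rewrite finset.in_setI => /andP[_ jq].
  exact: Hout (JsQ p) (JsQ q) (Jsinj p q pq) (j p) (j q) jp jq.
have Hexp : expR (- (delta m.+2 * mindist d g)) <= expR (- (beta * delta r)).
  rewrite ler_expR lerN2 [X in _ <= X]mulrC.
  apply: ler_pM => //; [exact: ltW | exact: ltW | exact: ltW | exact: dmono].
pose c := Ct1 * expR (sigma s * alpha) * N s f.
have c0 : 0 <= c.
  apply: mulr_ge0 => //; apply: mulr_ge0; [exact: le_trans Ct10 | exact: expR_ge0].
have HN : forall p, N t (F' p) <= Kp * \prod_(i in I :&: Js p) c.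
  move=> p; rewrite F'E; apply: le_trans (HKp _ _ _ _) _.
  - rewrite -cardE card_gt0 JsI /=.
    by rewrite -[X in (_ <= X)%N](card_ord r) max_card.
  - by move=> i; exact: Ah.
  rewrite big_enum ler_wpM2l // ler_prod // => i iin; apply/andP; split.
    by apply: (Nge0 sA GN) => //; exact: Ah.
  apply: le_trans (HCt _ _ Af) _.
  have dle : d ((h (j p))^-1 * h i)%g 1%g <= alpha.
    rewrite -(mulVg (h (j p))) Hli.
    move: iin (jin p); rewrite !finset.in_setI => /andP[_ ip] /andP[_ jp].
    exact: Hin (JsQ p) i (j p) ip jp.
  rewrite /c -mulrA -[X in _ <= X]mulrA.
  apply: (@le_trans _ _ (`|Ct| * (expR (sigma s * d ((h (j p))^-1 * h i)%g 1%g) * N s f))).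
    apply: ler_wpM2r; [apply: mulr_ge0 => //; exact: expR_ge0 | exact: ler_norm].
  apply: ler_pM => //.
    by apply: mulr_ge0 => //; exact: expR_ge0.
    by rewrite /Ct1 lerDl.
  apply: ler_wpM2r => //; rewrite ler_expR; apply: ler_wpM2l => //; exact: ltW.
have e1 : 1 <= expR (sigma s * alpha).
  rewrite -expR0 ler_expR; apply: mulr_ge0 => //; exact: ltW.
have Ce1 : 1 <= Ct1 * expR (sigma s * alpha).
  by rewrite -[1]mulr1; apply: ler_pM.
have Ce0 : 0 <= Ct1 * expR (sigma s * alpha) by apply: le_trans Ce1.
have HY1 : \prod_(p < m.+2) N t (F' p) <=
    Kp ^+ m.+2 * ((Ct1 * expR (sigma s * alpha)) ^+ #|I| * \prod_(i in I) N s f).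
  apply: (@le_trans _ _ (\prod_(p < m.+2) (Kp * \prod_(i in I :&: Js p) c))).
    apply: ler_prod => p _; apply/andP; split; last exact: HN.
    by apply: (Nge0 sA GN) => //; exact: t1.
  rewrite big_split /= prodr_const card_ord ler_wpM2l //; first exact: exprn_ge0.
  rewrite (big_enum_nth finset.set0 _ (fun J => \prod_(i in I :&: J) c) Tsz).
  rewrite -(prodT (fun _ => c)) /c big_split /= prodr_const.
  by [].
have HY2 : Kp ^+ m.+2 * ((Ct1 * expR (sigma s * alpha)) ^+ #|I| * \prod_(i in I) N s f)
   <= Kp1 ^+ S0 * ((Ct1 * expR (sigma s * alpha)) ^+ r * \prod_(i in I) N s f).
  have pN0 : 0 <= \prod_(i in I) N s f by exact: prodr_ge0.
  apply: ler_pM.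
  - exact: exprn_ge0.
  - by apply: mulr_ge0 => //; exact: exprn_ge0.
  - apply: (@le_trans _ _ (Kp1 ^+ m.+2)).
      by apply: lerXn2r; rewrite ?nnegrE // /Kp1 ?lerDl // addr_ge0.
    apply: ler_weXn2l => //; rewrite -Tk; exact: max_card.
  apply: ler_wpM2r => //; apply: ler_weXn2l => //.
  by rewrite -[X in (_ <= X)%N](card_ord r) max_card.
have Eexp : expR (- (beta * delta r - r%:R * alpha * sigma s)) =
    expR (- (beta * delta r)) * expR (sigma s * alpha) ^+ r.
  rewrite -expRM_natl -expRD; congr expR; ring.
have X10 : 0 <= expR (- (delta m.+2 * mindist d g)) by exact: expR_ge0.
have Y10 : 0 <= \prod_(p < m.+2) N t (F' p).
  by apply: prodr_ge0 => p _; apply: (Nge0 sA GN) => //; exact: t1.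
rewrite -mulrA; apply: (@le_trans _ _ (Cmix * (expR (- (beta * delta r)) *
   (Kp1 ^+ S0 * ((Ct1 * expR (sigma s * alpha)) ^+ r * \prod_(i in I) N s f))))).
  apply: ler_wpM2l => //; apply: ler_pM => //.
  exact: le_trans HY1 HY2.
rewrite Eexp exprMn.
move: (Kp1 ^+ S0) (Ct1 ^+ r) (expR (- (beta * delta r))) (expR (sigma s * alpha) ^+ r)
  (\prod_(i in I) N s f) => a b c' e p.
rewrite le_eqVlt; apply/orP; left; apply/eqP; ring.
Qed.

Lemma ae_hact (R : realType) (G : groupType) dX (X : measurableType dX)
  (P : probability X R) (act : G -> X -> X) (f : X -> R) (B : R) g :
  mp_action P act -> {ae P, forall x, `|f x| <= B} ->
  {ae P, forall x, `|hact act g f x| <= B}.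
Proof.
move=> [_ _ mact actP] [A0 [mA0 PA0 sub]].
exists (act (g^-1)%g @^-1` A0); split.
- by rewrite -[X in measurable X]setTI; apply: (mact _) => //.
- by rewrite actP.
- by move=> x /= Hx; apply: sub.
Qed.

Lemma sup_bound (R : realType) (G : groupType) (d : G -> G -> R) dX (X : measurableType dX)
  (P : probability X R) (act : G -> X -> X) (A : set (X -> R))
  (N : nat -> (X -> R) -> R) (sigma : nat -> R) r s :
  mp_action P act -> inv_subalgebra P act A -> good_seminorms P act d A N sigma ->
  (1 <= s)%N ->
  exists L, 0 <= L /\ forall f, A f -> forall (h : 'I_r -> G) (S : {set 'I_r}),
  `|psi P act f h S| <= \prod_(i in S) (L * N s f).
Proof.
move=> mp sA GN s1; have [_ _ [C HC] _ _] := GN s s1.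
exists `|C|; split => // f Af h S.
have Nf0 : 0 <= N s f by exact: (Nge0 sA GN).
have [AL _ _ _ Ah] := sA.
rewrite /psi; case: ifP => [/eqP ->|Sn0]; first by rewrite big_set0 normr1.
have Hae : {ae P, forall x, `|f x| <= `|C| * N s f}.
  apply: filterS (HC f Af) => x /= Hx; apply: le_trans Hx _.
  by apply: ler_wpM2r => //; exact: ler_norm.
have Hall : {ae P, forall x, forall i : 'I_r, `|hact act (h i) f x| <= `|C| * N s f}.
  by apply: filter_forall => i; exact: ae_hact.
have mprod : A (fun x => \prod_(i in S) hact act (h i) f x).
  have -> : (fun x => \prod_(i in S) hact act (h i) f x) =
      (fun x => \prod_(i <- enum S) hact act (h i) f x).
    by apply/funext => x; rewrite big_enum.
  apply: (Aprod sA); last by move=> i; exact: Ah.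
  by rewrite -cardE card_gt0 Sn0.
apply: mu_bound.
- by have [] := AL _ mprod.
- by apply: prodr_ge0 => i _; apply: mulr_ge0.
apply: filterS Hall => x /= Hx; rewrite normr_prod; apply: ler_prod => i _.
by rewrite normr_ge0 Hx.
Qed.

Unset Implicit Arguments.
Set Strict Implicit.

Theorem proposition7p2
  (R : realType) (H : groupType) (d : H -> H -> R)
  (dX : measure_display) (X : measurableType dX) (P : probability X R)
  (act : H -> X -> X) (A : set (X -> R)) (N : nat -> (X -> R) -> R)
  (delta : nat -> R) (sk : nat -> nat) (sigma : nat -> R) :
  is_metric d -> left_invariant d ->
  mp_action P act ->
  inv_subalgebra P act A ->
  good_seminorms P act d A N sigma ->
  exp_mixing_all_orders P act d A N delta sk ->
  constants_ok delta sk sigma ->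
  forall r : nat, (3 <= r)%N ->
  forall s : nat, (sk r + r < s)%N ->
  exists C : R,
  forall alpha beta : R, 0 <= alpha -> alpha < beta ->
  forall Q : {set {set 'I_r}}, finset.partition Q [set: 'I_r] ->
  forall h : 'I_r -> H, in_Delta d Q alpha beta h ->
  forall f : X -> R, A f ->
  forall Ps : seq {set 'I_r}, cyc_ord_partition Ps ->
  `| psit P act f h Ps - psitQ P act Q f h Ps |
    <= C * expR (- (beta * delta r - r%:R * alpha * sigma s)) * N s f ^+ r.
Proof.
move=> Hd Hli mp sA GN Mx cok r r3 s Hs.
have [Kb [Kb0 HKb]] := block_bound Hd Hli mp sA GN Mx cok r3 Hs.
have s1 : (1 <= s)%N by clear -Hs; lia.
have [L [L0 HL]] := sup_bound r mp sA GN s1.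
pose L1 := L + 1.
have L10 : 1 <= L1 by rewrite /L1 lerDr.
pose S0 := #|{set 'I_r}|.
exists (S0%:R * Kb * L1 ^+ r).
move=> alpha beta a0 ab Q PQ h HD f Af Ps /andP[uPs pPs].
have Nf0 : 0 <= N s f by exact: (Nge0 sA GN).
set E := expR _.
have E0 : 0 <= E by exact: expR_ge0.
pose w (I : {set 'I_r}) := \prod_(i in I) (L1 * N s f).
have LL1 : forall I : {set 'I_r}, \prod_(i in I) (L * N s f) <= w I.
  move=> I; apply: ler_prod => i _; apply/andP; split; first exact: mulr_ge0.
  by apply: ler_wpM2r => //; rewrite /L1 lerDl.
have Ha : forall I, `|psi P act f h I| <= w I.
  by move=> I; apply: le_trans (HL f Af h I) (LL1 I).
have Hb : forall I, `|psiQ P act Q f h I| <= w I.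
  move=> I; apply: le_trans (LL1 I).
  rewrite /psiQ normr_prod (regroup I _ _ PQ); apply: ler_prod => J _.
  by rewrite normr_ge0 HL.
have Hab : forall I, `|psi P act f h I - psiQ P act Q f h I| <= Kb * E * w I.
  move=> I; apply: le_trans (HKb alpha beta a0 ab Q PQ h HD f Af I) _.
  apply: ler_wpM2l; first exact: mulr_ge0.
  apply: ler_prod => i _; rewrite Nf0 /=.
  by rewrite ler_peMl.
rewrite /psit /psitQ; apply: le_trans (telescope_prod Ps Kb0 E0 Ha Hb Hab) _.
have wP : \prod_(I <- Ps) w I = L1 ^+ r * N s f ^+ r.
  rewrite /w big_uniq //.
  have -> : \prod_(I in Ps) \prod_(i in I) (L1 * N s f) =
      \prod_(I in [set I in Ps]) \prod_(i in I) (L1 * N s f).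
    by apply: eq_bigl => I; rewrite inE.
  rewrite -(set_partition_big _ pPs) prodr_const cardsT card_ord exprMn.
  by [].
rewrite wP.
have szP : ((size Ps)%:R <= S0%:R :> R).
  rewrite ler_nat -(card_uniqP uPs); exact: max_card.
have aa : 0 <= L1 ^+ r by apply: exprn_ge0; apply: le_trans L10.
have bb : 0 <= N s f ^+ r by exact: exprn_ge0.
move: (L1 ^+ r) (N s f ^+ r) aa bb => a b aa bb.
apply: (@le_trans _ _ (S0%:R * Kb * E * (a * b))).
  rewrite -!mulrA; apply: ler_wpM2r => //.
  by apply: mulr_ge0 => //; apply: mulr_ge0 => //; exact: mulr_ge0.
rewrite le_eqVlt; apply/orP; left; apply/eqP; ring.
Qed.
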